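(* Let $R$ be a commutative ring with identity. If $R$ is semi-complemented, then $R$ is almost complemented.
   Context: $\mathfrak{N}(R)$ is the nilradical and $\mathrm{reg}(R)$ the set of regular elements (non-zero-divisors). An element $a$ is complemented if there is $b$ with $ab=0$ and $a+b\in\mathrm{reg}(R)$; a ring is complemented if all its elements are. $R$ is semi-complemented if every element of $R\setminus\mathfrak{N}(R)$ is complemented. $R$ is almost complemented if $R/\mathfrak{N}(R)$ is a complemented ring. *)

(* Defs.v *)
(* The nilradical is made a boolean predicate classically
   (mathcomp-classical boolp `asbool`), so that MathComp's ring quotient
   {ideal_quot _} (ring_quotient.v) can be used to form R / N(R). *)
From HB Require Import structures.
From mathcomp Require Import all_boot all_algebra ring_quotient.
From mathcomp Require Import boolp zify.
Set Implicit Arguments. Unset Strict Implicit. Unset Printing Implicit Defensive.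
Import GRing.Theory.
Local Open Scope ring_scope.

Definition nilpotent_el (R : comNzRingType) (x : R) : Prop :=
  exists n : nat, x ^+ n = 0.

Definition nilrad (R : comNzRingType) : {pred R} :=
  fun x => `[< nilpotent_el x >].
Arguments nilrad : clear implicits.

Definition regular (R : comNzRingType) (a : R) : Prop :=
  forall c : R, a * c = 0 -> c = 0.

Definition complemented_el (R : comNzRingType) (a : R) : Prop :=
  exists b : R, a * b = 0 /\ regular (a + b).

Definition complemented_ring (R : comNzRingType) : Prop :=
  forall a : R, complemented_el a.

Definition semi_complemented (R : comNzRingType) : Prop :=
  forall a : R, a \notin nilrad R -> complemented_el a.

Lemma nilradP (R : comNzRingType) (x : R) :
  reflect (nilpotent_el x) (x \in nilrad R).
Proof. by rewrite /nilrad unfold_in; apply: (iffP idP) => /asboolP. Qed.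

Lemma nilrad_idealr_closed (R : comNzRingType) : idealr_closed (nilrad R).
Proof.
split.
- by apply/nilradP; exists 1%N; rewrite expr1.
- apply/negP => /nilradP [n]; rewrite expr1n => /eqP; by rewrite oner_eq0.
- move=> a u v /nilradP [n hu] /nilradP [m hv]; apply/nilradP.
  have hau : (a * u) ^+ n = 0 by rewrite exprMn hu mulr0.
  exists (n + m)%N; rewrite exprDn big1 // => [[i /= ltim]] _.
  case: (leqP m i) => hi.
    by rewrite -(subnKC hi) exprD hv mul0r mulr0 mul0rn.
  have hn : (n <= n + m - i)%N by lia.
  by rewrite -(subnKC hn) exprD hau !mul0r mul0rn.
Qed.

HB.instance Definition _ (R : comNzRingType) :=
  isIdealr.Build R (nilrad R) (@nilrad_idealr_closed R).

Definition almost_complemented (R : comNzRingType) : Prop :=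
  complemented_ring {ideal_quot (nilrad R)}.

(* Main.v *)
Require Import Defs.
From HB Require Import structures.
From mathcomp Require Import all_boot all_algebra ring_quotient.
Set Implicit Arguments. Unset Strict Implicit.
Import GRing.Theory.
Local Open Scope ring_scope.
Local Open Scope quotient_scope.

Lemma pi0E (R : comNzRingType) (c : R) :
  (\pi_{ideal_quot (nilrad R)} c == 0) = (c \in nilrad R).
Proof.
have -> : (0 : {ideal_quot (nilrad R)}) = \pi_{ideal_quot (nilrad R)} 0
  by rewrite rmorph0.
by rewrite -Quotient.idealrBE subr0.
Qed.

Lemma piM (R : comNzRingType) (a b : R) :
  \pi_{ideal_quot (nilrad R)} (a * b) =
  \pi_{ideal_quot (nilrad R)} a * \pi_{ideal_quot (nilrad R)} b.
Proof. by rewrite rmorphM. Qed.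

Lemma piD (R : comNzRingType) (a b : R) :
  \pi_{ideal_quot (nilrad R)} (a + b) =
  \pi_{ideal_quot (nilrad R)} a + \pi_{ideal_quot (nilrad R)} b.
Proof. by rewrite rmorphD. Qed.

Lemma regX (R : comNzRingType) (a : R) n : regular a -> regular (a ^+ n).
Proof.
move=> ra; elim: n => [|n IH] c; first by rewrite expr0 mul1r.
by rewrite exprS -mulrA => /ra /IH.
Qed.

Theorem mainTheorem4 (R : comNzRingType) :
  semi_complemented R -> almost_complemented R.
Proof.
move=> H x; elim/quotW: x => a.
case: (boolP (a \in nilrad R)) => ha.
  exists 1; have /eqP -> : \pi_{ideal_quot (nilrad R)} a == 0 by rewrite pi0E.
  split; first by rewrite mul0r.
  by move=> c; rewrite add0r mul1r.
have [b [hab rab]] := H a ha.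
exists (\pi_{ideal_quot (nilrad R)} b); split.
  by rewrite -piM hab rmorph0.
elim/quotW => c; rewrite -piD -piM => /eqP; rewrite pi0E => /nilradP [n hn].
apply/eqP; rewrite pi0E; apply/nilradP; exists n.
move: hn; rewrite exprMn.
exact: (regX (n:=n) rab).
Qed.
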